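(* Let $Q=(q_n)_{n\ge1}$ be a basic sequence that is infinite in limit, let $F$ be a $Q$-special sequence, and let $(a,b,1)\in S_Q$. Then the finite sequence $y_{F,a,b}=\left(\frac{F_{(a,b,c)}}{q_{\phi_Q(a,b,c)}}\right)_{c=1}^a$ is an almost-arithmetic progression-$\left(\frac1a,\frac1a\right)$, and its star discrepancy satisfies $D^*(y_{F,a,b})\le\frac2a$.
   Context: A basic sequence is a sequence $Q=(q_n)_{n\ge1}$ of integers with $q_n\ge 2$; it is infinite in limit if $q_n\to\infty$. $\mathbb{N}$ denotes the positive integers. For each positive integer $j$ let $\nu_j=\min\{N : q_m\ge 2j^2 \text{ for all } m\ge N\}$. Define $l_1=\max(\nu_2-1,1)$ and, recursively for $i\ge 2$, $l_i=\max\big(\min\{k\in\mathbb{N} : l_1+2l_2+\cdots+(i-1)l_{i-1}+ik\ge \nu_{i+1}-1\},1\big)$. Put $L_i=\sum_{j=1}^i jl_j$ (with $L_0=0$). Let $S_Q=\{(a,b,c)\in\mathbb{N}^3 : b\le l_a,\ c\le a\}$ and $\phi_Q(a,b,c)=L_{a-1}+(b-1)a+c$; $\phi_Q$ is a bijection $S_Q\to\mathbb{N}$. A $Q$-special sequence is a family of integers $F=(F_{(a,b,c)})_{(a,b,c)\in S_Q}$ with $F_{(a,b,1)}=0$ for all $(a,b,1)\in S_Q$ and $\frac{F_{(a,b,c)}}{q_{\phi_Q(a,b,c)}}\in\left[\frac{c-1}{a}-\frac{1}{2a^2},\frac{c-1}{a}+\frac{1}{2a^2}\right]$ for $(a,b,c)\in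 S_Q$ with $c>1$. For $0\le\delta<1$ and $\varepsilon>0$, a finite sequence $x_1<x_2<\cdots<x_N$ in $[0,1)$ is an almost-arithmetic progression-$(\delta,\varepsilon)$ if there is $\eta$ with $0<\eta\le\varepsilon$ such that $0\le x_1\le\eta+\delta\eta$; $\eta-\delta\eta\le x_{n+1}-x_n\le\eta+\delta\eta$ for $1\le n\le N-1$; and $1-\eta-\delta\eta\le x_N<1$. For a finite sequence $z=(z_1,\dots,z_n)$ in $[0,1)$, its star discrepancy is $D^*(z)=\sup_{0<\gamma\le1}\left|\frac{\#\{k\le n: z_k\in[0,\gamma)\}}{n}-\gamma\right|$. *)

(* Defs.v *)
From HB Require Import structures.
From mathcomp Require Import all_boot all_order all_algebra.
From mathcomp Require Import boolp classical_sets reals.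
From mathcomp Require Import zify.
Set Implicit Arguments. Unset Strict Implicit. Unset Printing Implicit Defensive.
Import Order.TTheory GRing.Theory Num.Theory.

(* A sequence Q = (q_n)_{n>=1} is represented by q : nat -> nat; q 0 is unused. *)
Definition basic_seq (q : nat -> nat) : Prop := forall n, (0 < n)%N -> (2 <= q n)%N.

Definition infinite_in_limit (q : nat -> nat) : Prop :=
  forall M, exists N, forall n, (N <= n)%N -> (M <= q n)%N.

Definition nu_pred (q : nat -> nat) (j : nat) : pred nat :=
  fun N => `[< (0 < N)%N /\ forall m, (N <= m)%N -> (2 * j ^ 2 <= q m)%N >].

Definition nu (q : nat -> nat) (j : nat) : nat :=
  match pselect (exists N, nu_pred q j N) with
  | left h => ex_minn h
  | right _ => 0%N
  end.

(* for i = i'.+2 : { k in N : Lprev + i k >= nu_{i+1} - 1 } is nonempty *)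
Definition l_pred (q : nat -> nat) (i' Lprev : nat) : pred nat :=
  fun k => (0 < k)%N && (nu q i'.+3 - 1 <= Lprev + i'.+2 * k)%N.

Lemma l_pred_ex (q : nat -> nat) (i' Lprev : nat) : exists k, l_pred q i' Lprev k.
Proof.
exists (nu q i'.+3 - 1).+1; rewrite /l_pred /=.
lia.
Qed.

(* l_i given Lprev = L_{i-1} = l_1 + 2 l_2 + ... + (i-1) l_{i-1} *)
Definition l_step (q : nat -> nat) (i Lprev : nat) : nat :=
  match i with
  | 0 => 0%N
  | 1 => maxn (nu q 2 - 1) 1
  | i'.+2 => maxn (ex_minn (l_pred_ex q i' Lprev)) 1
  end.

Fixpoint LL (q : nat -> nat) (i : nat) : nat :=
  match i with
  | 0 => 0%N
  | i'.+1 => (LL q i' + i'.+1 * l_step q i'.+1 (LL q i'))%N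
  end.

Definition ll (q : nat -> nat) (i : nat) : nat := l_step q i (LL q i.-1).

Definition inS (q : nat -> nat) (a b c : nat) : bool :=
  [&& (1 <= a)%N, (1 <= b)%N, (b <= ll q a)%N, (1 <= c)%N & (c <= a)%N].

Definition phi (q : nat -> nat) (a b c : nat) : nat :=
  (LL q a.-1 + (b - 1) * a + c)%N.

Local Open Scope ring_scope.

Definition Q_special (R : realType) (q : nat -> nat) (F : nat -> nat -> nat -> int) : Prop :=
  (forall a b, inS q a b 1 -> F a b 1%N = 0) /\
  (forall a b c, inS q a b c -> (1 < c)%N ->
     ((c%:R - 1) / a%:R - 1 / (2 * a%:R ^+ 2) <= (F a b c)%:~R / (q (phi q a b c))%:R :> R) /\
     ((F a b c)%:~R / (q (phi q a b c))%:R <= (c%:R - 1) / a%:R + 1 / (2 * a%:R ^+ 2) :> R)).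

(* A finite sequence x_1,...,x_N is represented by x : nat -> R (indices 1..N). *)
Definition almost_AP (R : realType) (delta eps : R) (N : nat) (x : nat -> R) : Prop :=
  (forall n, (1 <= n <= N)%N -> 0 <= x n /\ x n < 1) /\
  (forall n, (1 <= n)%N -> (n < N)%N -> x n < x n.+1) /\
  exists eta : R, 0 < eta /\ eta <= eps /\
    0 <= x 1%N /\ x 1%N <= eta + delta * eta /\
    (forall n, (1 <= n)%N -> (n <= N - 1)%N ->
       eta - delta * eta <= x n.+1 - x n /\ x n.+1 - x n <= eta + delta * eta) /\
    1 - eta - delta * eta <= x N /\ x N < 1.

Definition star_discrepancy (R : realType) (n : nat) (z : nat -> R) : R :=
  sup [set d : R | exists gamma : R, 0 < gamma /\ gamma <= 1 /\
     d = `| (count (fun k => (0 <= z k) && (z k < gamma)) (iota 1 n))%:R / n%:R - gamma |].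

Definition yseq (R : realType) (q : nat -> nat) (F : nat -> nat -> nat -> int) (a b : nat)
  : nat -> R := fun c => (F a b c)%:~R / (q (phi q a b c))%:R.

(* Main.v *)
Require Import Defs.
From HB Require Import structures.
From mathcomp Require Import all_boot all_order all_algebra.
From mathcomp Require Import boolp classical_sets reals.
From mathcomp Require Import zify ring lra.
Import Order.TTheory GRing.Theory Num.Theory.
Local Open Scope ring_scope.

Lemma sub_in_count (T : eqType) (p1 p2 : pred T) (s : seq T) :
  (forall x, x \in s -> p1 x -> p2 x) -> (count p1 s <= count p2 s)%N.
Proof.
elim: s => //= x s IH H.
apply: leq_add.
  case: (boolP (p1 x)) => //= h; by rewrite (H x (mem_head _ _) h).
apply: IH => y ys; apply: H; by rewrite inE ys orbT.
Qed.

Lemma count_lt_upper (R : realFieldType) (t : R) n : 0 <= t ->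
  (count (fun k : nat => k%:R < t) (iota 1 n))%:R <= t.
Proof.
move=> t0; elim: n => [|n IH]; first by [].

rewrite -[n.+1]addn1 iotaD
 count_cat /= natrD addn0 add1n.
case: (boolP (n.+1%:R < t)) => h /=; last by rewrite addr0.
have : (count (fun k : nat => (k%:R < t)%R) (iota 1 n) <= n)%N.
  by rewrite -[X in (_ <= X)%N](size_iota 1 n) count_size.
rewrite -(ler_nat R) => h2.
rewrite -natr1 in h. move: IH h2; set c := (count _ _)%:R => IH h2. apply: le_trans (ltW h); by rewrite lerD2r.
Qed.

Lemma count_lt_lower (R : realFieldType) (t : R) n : t <= n%:R ->
  t - 1 <= (count (fun k : nat => k%:R < t) (iota 1 n))%:R.
Proof.
elim: n => [|n IH]; first by move=> h /=; lra.
move=> htn.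
rewrite -[n.+1]addn1 iotaD count_cat /= natrD addn0 add1n.
set b := ((n.+1%:R < t)%R : nat)%:R.
have hb : 0 <= b by rewrite /b ler0n.
case: (lerP t n%:R) => h.
  have := IH h; set c := (count _ _)%:R => hc; lra.
have -> : count (fun k : nat => k%:R < t) (iota 1 n) = n.
  rewrite -[RHS](size_iota 1 n) -count_predT; apply: eq_in_count => k.
  rewrite mem_iota => /andP [_ hk] /=.
  apply: le_lt_trans h; rewrite ler_nat; lia.
rewrite -natr1 in htn; lra.
Qed.

Lemma ybounds (R : realType) q F (hF : Q_special R q F) a b (hab : inS q a b 1) c :
  (1 <= c <= a)%N ->
  ((c%:R - 1) * a%:R^-1 - a%:R^-1 * a%:R^-1 / 2 <= yseq R q F a b c /\
   yseq R q F a b c <= (c%:R - 1) * a%:R^-1 + a%:R^-1 * a%:R^-1 / 2) /\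
  0 <= yseq R q F a b c.
Proof.
move=> /andP [c1 ca].
move: (hab); rewrite /inS => /and5P [a1 b1 bl _ _].
have a0 : 0 < a%:R :> R by rewrite ltr0n.
have e0 : 0 < a%:R^-1 :> R by rewrite invr_gt0.
have ea : a%:R * a%:R^-1 = 1 :> R by rewrite mulfV // gt_eqF.
have E : 1 / (2 * a%:R ^+ 2) = a%:R^-1 * a%:R^-1 / 2 :> R.
  by field; rewrite gt_eqF.
case: (ltngtP c 1) => hc; first lia.
- have hS : inS q a b c by rewrite /inS a1 b1 bl c1 ca.
  have [h1 h2] := hF.2 a b c hS hc.
  rewrite E in h1 h2.
  have hc' : 2%:R <= c%:R :> R by rewrite ler_nat.
  have ha' : c%:R <= a%:R :> R by rewrite ler_nat.
  rewrite /yseq; split; first by split.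
  apply: le_trans h1.
  set e := a%:R^-1 in e0 ea *.
  nra.
- subst c; rewrite /yseq hF.1 // mul0r subrr mul0r.
  nra.
Qed.

Theorem mainTheorem14 (R : realType) (q : nat -> nat)
  (hbasic : basic_seq q) (hinf : infinite_in_limit q)
  (F : nat -> nat -> nat -> int) (hF : Q_special R q F)
  (a b : nat) (hab : inS q a b 1) :
  almost_AP (a%:R^-1) (a%:R^-1) a (yseq R q F a b) /\
  star_discrepancy a (yseq R q F a b) <= 2 / a%:R.
Proof.
move: (hab); rewrite /inS => /and5P [a1 _ _ _ _].
have a0 : 0 < a%:R :> R by rewrite ltr0n.
have ea : a%:R * a%:R^-1 = 1 :> R by rewrite mulfV // gt_eqF.
have e0 : 0 < a%:R^-1 :> R by rewrite invr_gt0.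
have e1 : a%:R^-1 <= 1 :> R by rewrite invr_le1 // ?ler1n // unitf_gt0.
have y1 : yseq R q F a b 1 = 0 by rewrite /yseq hF.1 // mul0r.
have YB := @ybounds _ _ _ hF _ _ hab.
have ea' : forall x : R, a%:R * (x * a%:R^-1) = x.
  by move=> x; rewrite mulrC -mulrA (mulrC _ a%:R) ea mulr1.
set y := yseq R q F a b in YB y1 *.
set e := a%:R^-1 in e0 e1 ea ea' YB *.
split.
  split.
    move=> n hn; have [[l u] p] := YB n hn; split => //.
    have hn' : n%:R <= a%:R :> R by rewrite ler_nat; lia.
    nra.
  have Hd : forall n, (1 <= n)%N -> (n < a)%N ->
      e - e * e <= y n.+1 - y n <= e + e * e.
    move=> n n1 na.
    have [[l u] _] : _ := YB n ltac:(lia).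
    have [[l' u'] _] : _ := YB n.+1 ltac:(lia).
    rewrite -natr1 in l' u'.
    by apply/andP; split; nra.
  have ha2 : forall n, (1 <= n)%N -> (n < a)%N -> 2 * e <= 1.
    move=> n n1 na; have : 2%:R <= a%:R :> R by rewrite ler_nat; lia.
    nra.
  split.
    move=> n n1 na; have /andP [h _] := Hd n n1 na.
    have := ha2 n n1 na; nra.
  exists e; split => //; split => //; split; first by rewrite y1.
  split; first by rewrite y1; nra.
  split.
    move=> n n1 na; have /andP [h1 h2] := Hd n n1 ltac:(lia); lra.
  have [[l u] _] : _ := YB a ltac:(lia).
  have ha : a%:R * e = 1 := ea.
  split; nra.
apply: ge_sup.
  exists (`| (count (fun k => (0 <= y k) && (y k < 1)) (iota 1 a))%:R / a%:R - 1|).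
  by exists 1; split => //; split.
move=> d [g [g0 [g1 ->]]].
set m := count _ _.
have hup : (m <= count (fun k : nat => (k%:R < a%:R * g + 2)%R) (iota 1 a))%N.
  apply: sub_in_count => k; rewrite mem_iota => hk /= hkk; have hkg : y k < g by case/andP: hkk.
  have [[l _] _] : _ := YB k ltac:(lia).
  have := ea' ((k%:R - 1) - e / 2).
  have : a%:R * (((k%:R - 1) - e / 2) * e) < a%:R * g.
    by rewrite ltr_pM2l //; lra.
  lra.
have hlo : (count (fun k : nat => (k%:R < a%:R * g)%R) (iota 1 a) <= m)%N.
  apply: sub_in_count => k; rewrite mem_iota => hk /= hkg.
  have [[_ u] p] : _ := YB k ltac:(lia).
  have : k%:R * e < g.
    by rewrite -(ltr_pM2l a0) ea'.
  move=> hke; apply/andP; split => //; nra.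
have Hu := @count_lt_upper _ (a%:R * g + 2) a ltac:(nra).
have Hl := @count_lt_lower _ (a%:R * g) a ltac:(nra).
rewrite -(ler_nat R) in hup; rewrite -(ler_nat R) in hlo.
have mu : m%:R <= a%:R * g + 2 by apply: le_trans hup Hu.
have ml : a%:R * g - 1 <= m%:R by apply: le_trans Hl hlo.
have mu' : m%:R * e <= g + 2 * e.
  have := ler_wpM2r (ltW e0) mu; have := ea' g; rewrite mulrA.
  rewrite -mulrA (mulrC g) mulrA in ea' *. nra.
rewrite ler_norml; apply/andP; split; rewrite -/e; nra.
Qed.
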